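(* Let $c_0>0$, $\tau_1>0$, $\alpha_2\ge 0$, and define the complex attenuation laws $$\alpha_*^{ksb}(\omega)=\frac{-i\omega}{c_0\sqrt{1-i\tau_1\omega}}+\alpha_2(-i\omega),\qquad \alpha_*^{tv}(\omega)=\frac{-i\omega}{c_0\sqrt{1-i\tau_1\omega}}-\frac{-i\omega}{c_0}\qquad(\omega\in\mathbb{R}).$$ Let $G^{ksb}$ and $G^{tv}$ be the Green functions associated with $\alpha_*^{ksb}$ and $\alpha_*^{tv}$ respectively (see context), and let $$T_1(\mathbf{x}):=\frac{|\mathbf{x}|}{c_1},\qquad \frac1{c_1}:=\frac1{c_0}+\alpha_2 .$$ Then $G^{tv}(\mathbf{x},t-T_1(\mathbf{x}))=G^{ksb}(\mathbf{x},t)$ for all $\mathbf{x}\in\mathbb{R}^3\setminus\{0\}$ and $t\in\mathbb{R}$ (as distributions in $t$).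
   Context: The square root is the principal branch. The time Fourier transform is $\hat f(\omega)=(2\pi)^{-1/2}\int_{\mathbb{R}} f(t)e^{i\omega t}\,dt$. For a complex attenuation law $\alpha_*$, the associated Green function $G(\mathbf{x},t)$ is the (distribution in $t$) whose time Fourier transform is $$\hat G(\mathbf{x},\omega)=\frac{1}{\sqrt{2\pi}}\,\frac{e^{i k(\omega)|\mathbf{x}|}}{4\pi|\mathbf{x}|},\qquad k(\omega)=i\,\alpha_*(\omega)+\frac{\omega}{c_0}.$$ This is the Green function of the dissipative wave equation $\Delta p-(D_*+\frac1{c_0}\partial_t)^2p=f$, where $D_*$ is the time-convolution operator with kernel $\mathcal{F}^{-1}\{\alpha_*\}$. *)

(* Defs.v *)
From HB Require Import structures.
From mathcomp Require Import all_boot all_order all_algebra.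
From mathcomp Require Import all_classical all_reals all_analysis.
From mathcomp Require Import complex.
Set Implicit Arguments. Unset Strict Implicit. Unset Printing Implicit Defensive.
Import Order.TTheory GRing.Theory Num.Theory.
Local Open Scope ring_scope.
Local Open Scope complex_scope.

Section Defs.
Variable R : realType.

Definition enorm3 (x : 'rV[R]_3) : R := Num.sqrt (\sum_(i < 3) x ord0 i ^+ 2).

Definition cmod (z : R[i]) : R := Num.sqrt (complex.Re z ^+ 2 + complex.Im z ^+ 2).

(* principal branch of the complex square root (Re >= 0; arg in (-pi/2, pi/2]) *)
Definition psqrt (z : R[i]) : R[i] :=
  Complex (Num.sqrt ((cmod z + complex.Re z) / 2))
          ((if complex.Im z < 0 then -1 else 1) * Num.sqrt ((cmod z - complex.Re z) / 2)).

Definition cexp (z : R[i]) : R[i] :=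
  Complex (expR (complex.Re z) * cos (complex.Im z)) (expR (complex.Re z) * sin (complex.Im z)).

Definition cint (f : R -> R[i]) : R[i] :=
  Complex (Rintegral (@lebesgue_measure R) setT (fun t => complex.Re (f t)))
          (Rintegral (@lebesgue_measure R) setT (fun t => complex.Im (f t))).

Definition smoothR (f : R -> R) : Prop :=
  forall (n : nat) (t : R), derivable (derive1n n f) t 1.

Definition test_fun (psi : R -> R[i]) : Prop :=
  smoothR (fun t => complex.Re (psi t)) /\ smoothR (fun t => complex.Im (psi t)) /\
  exists M : R, forall t : R, M < `|t| -> psi t = 0.

Definition distribution := (R -> R[i]) -> R[i].

(* translation: [translate T u] is the distribution t |-> u(t - T),
   i.e. <u(. - T), psi> = <u, psi(. + T)> *)
Definition translate (T : R) (u : distribution) : distribution :=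
  fun psi => u (fun t => psi (t + T)).

Definition invFT (psi : R -> R[i]) (w : R) : R[i] :=
  (Num.sqrt (2 * pi))^-1%:C * cint (fun t => psi t * cexp (- 'i * (w * t)%:C)).

Definition wavenum (alpha : R -> R[i]) (c0 : R) (w : R) : R[i] :=
  'i * alpha w + (w / c0)%:C.

Definition Ghat (alpha : R -> R[i]) (c0 : R) (x : 'rV[R]_3) (w : R) : R[i] :=
  (Num.sqrt (2 * pi))^-1%:C * cexp ('i * wavenum alpha c0 w * (enorm3 x)%:C)
    / (4 * pi * enorm3 x)%:C.

(* Green function G(x, .) as the distribution whose time Fourier transform
   (hat f(w) = (2 pi)^{-1/2} int f(t) e^{i w t} dt) is hat G(x, .):
   <G(x,.), psi> = int hat G(x,w) (J psi)(w) dw. *)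
Definition green (alpha : R -> R[i]) (c0 : R) (x : 'rV[R]_3) : distribution :=
  fun psi => cint (fun w => Ghat alpha c0 x w * invFT psi w).

Definition alpha_ksb (c0 tau1 alpha2 : R) (w : R) : R[i] :=
  (- 'i * w%:C) / (c0%:C * psqrt (1 - 'i * (tau1 * w)%:C))
  + alpha2%:C * (- 'i * w%:C).

Definition alpha_tv (c0 tau1 : R) (w : R) : R[i] :=
  (- 'i * w%:C) / (c0%:C * psqrt (1 - 'i * (tau1 * w)%:C))
  - (- 'i * w%:C) / c0%:C.

Definition c1 (c0 alpha2 : R) : R := (c0^-1 + alpha2)^-1.
Definition T1 (c0 alpha2 : R) (x : 'rV[R]_3) : R := enorm3 x / c1 c0 alpha2.

End Defs.

(* Main.v *)
Require Import Defs.
From HB Require Import structures.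
From mathcomp Require Import all_boot all_order all_algebra.
From mathcomp Require Import all_classical all_reals all_analysis.
From mathcomp Require Import complex.
From mathcomp Require Import measurable_realfun.
From mathcomp Require Import ring lra.
Import Order.TTheory GRing.Theory Num.Theory.
Import numFieldNormedType.Exports.
Local Open Scope ring_scope.
Local Open Scope complex_scope.
Section SA.
Variable R : realType.

Lemma cexpD (a b : R[i]) : cexp (a + b) = cexp a * cexp b.
Proof.
case: a => a1 a2; case: b => b1 b2; rewrite /cexp /=.
rewrite expRD cosD sinD; apply/eqP; rewrite eq_complex /=; apply/andP; split; apply/eqP; ring.
Qed.

Lemma ii : 'i * 'i = -1 :> R[i].
Proof. by apply/eqP; rewrite eq_complex /=; apply/andP; split; apply/eqP; ring. Qed.

Lemma shift_exp (w t T : R) :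
  cexp (- 'i * (w * t)%:C) = cexp (- 'i * (w * (t + T))%:C) * cexp ('i * (w * T)%:C).
Proof.
rewrite -cexpD; congr cexp; rewrite !rmorphM !rmorphD /=; ring.
Qed.
Lemma ghat_id (c0 tau1 alpha2 : R) (x : 'rV[R]_3) (w : R) :
  Ghat (alpha_tv c0 tau1) c0 x w * cexp ('i * (w * T1 c0 alpha2 x)%:C)
  = Ghat (alpha_ksb c0 tau1 alpha2) c0 x w.
Proof.
rewrite /Ghat /T1 /c1 invrK mulrAC -[_ * _ * cexp _]mulrA -cexpD.
congr (_ * cexp _ / _).
rewrite /wavenum /alpha_tv /alpha_ksb.
set P := (- 'i * w%:C) / (c0%:C * psqrt (1 - 'i * (tau1 * w)%:C)).
rewrite !rmorphM rmorphD /= !fmorphV /=.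
apply/eqP; rewrite -subr_eq0; apply/eqP.
transitivity (('i * 'i + 1) * ('i * w%:C * (enorm3 x)%:C * (c0%:C^-1 + alpha2%:C))).
  ring.
by rewrite ii addNr mul0r.
Qed.
Local Open Scope classical_set_scope.

Lemma mshift (T : R) : measurable_fun setT (fun t : R => (t + T)%R).
Proof. by apply: continuous_measurable_fun; move=> x; apply: cvgD; [exact: cvg_id | exact: cvg_cst]. Qed.

Lemma leb_shift (T : R) (A : set R) : measurable A ->
  lebesgue_measure A = pushforward lebesgue_measure (fun t : R => (t + T)%R) A.
Proof.
move=> mA.
refine (let mu : {measure set (measurableTypeR R) -> \bar R} :=
  @pushforward _ _ (measurableTypeR R) (measurableTypeR R) R lebesgue_measure (fun t => (t + T)%R) in _).
apply: (@lebesgue_measure_unique R mu _ A mA).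
move=> X [[a b] _ <-] /=.
rewrite /pushforward.
have -> : (fun t : R => (t + T)%R) @^-1` `]a, b]%classic = `]a - T, b - T]%classic.
  apply/seteqP; split => t /=; rewrite !in_itv /= => /andP[h1 h2]; apply/andP; split; lra.
rewrite !lebesgue_measure_itv /= !lte_fin.
have -> : (a - T < b - T) = (a < b) by rewrite ltrBlDr subrK.
by case: ifP => // _; rewrite -EFinB; congr (_%:E); ring.
Unshelve. exact: mshift.
Qed.
Local Open Scope ereal_scope.
Lemma int_shift (T : R) (f : R -> R) : measurable_fun setT f ->
  \int[lebesgue_measure]_t (f (t + T)%R)%:E = \int[lebesgue_measure]_t (f t)%:E.
Proof.
move=> mf.
have ms : @measurable_fun _ _ (measurableTypeR R) (measurableTypeR R) setT (fun t => (t + T)%R).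
  move=> _ Y mY; rewrite setTI; have := @mshift T measurableT Y mY; rewrite setTI; exact.
transitivity (\int[@pushforward _ _ (measurableTypeR R) (measurableTypeR R) R lebesgue_measure (fun t => (t + T)%R)]_t (f t)%:E); last first.
  apply: (eq_measure_integral lebesgue_measure); last first.
    move=> A mA _; rewrite /pushforward /=; have := leb_shift T A mA; rewrite /pushforward => ->//.

rewrite integralE [RHS]integralE.
rewrite (ge0_integral_pushforward ms) //; last first.
  by apply: measurable_funepos; apply/measurable_EFinP; exact: mf.
rewrite (ge0_integral_pushforward ms) //; last first.
  by apply: measurable_funeneg; apply/measurable_EFinP; exact: mf.
by rewrite preimage_setT -funepos_comp -funeneg_comp.
Qed.
Local Close Scope ereal_scope.

Lemma int_cs (h : R -> R) (M : R) : continuous h -> (forall t, M < `|t| -> h t = 0) ->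
  (@lebesgue_measure R).-integrable setT (EFin \o h).
Proof.
move=> ch hM.
have H0 : (@lebesgue_measure R).-integrable `[-M, M] (EFin \o h).
  apply: continuous_compact_integrable; first exact: segment_compact.
  exact: continuous_subspaceT.
have mI : measurable (`[-M, M]%classic : set (measurableTypeR R)).
  exact: (measurable_itv `[-M, M]%R).
have H := (integrable_mkcond _ mI).1 H0.
set g := (X in _.-integrable _ X) in H; have -> : EFin \o h = g.
  apply/funext => t; rewrite /g /patch /=.
case: ifPn => // /negP; rewrite inE /= in_itv /= => Hn.
rewrite hM //; rewrite ltNge; apply/negP => Ht; apply: Hn.
by rewrite -ler_norml.
by [].
Qed.

Lemma Rint_shift (T : R) (h : R -> R) : continuous h ->
  Rintegral (@lebesgue_measure R) setT (fun t => h (t + T)) =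
  Rintegral (@lebesgue_measure R) setT h.
Proof.
move=> ch; rewrite /Rintegral; congr fine; apply: int_shift.
exact: continuous_measurable_fun.
Qed.
Lemma cexp_mi (x : R) : cexp (- 'i * x%:C) = Complex (cos x) (- sin x).
Proof.
rewrite /cexp /=.
have e1 : - 0 * x - -1 * 0 = 0 :> R by ring.
have e2 : - 0 * 0 + -1 * x = - x :> R by ring.
by rewrite e1 e2 expR0 !mul1r cosN sinN.
Qed.

Local Close Scope complex_scope.
Definition csupp (g : R -> R[i]) := [/\ continuous (fun t => complex.Re (g t)),
  continuous (fun t => complex.Im (g t)) & exists M : R, forall t, M < `|t| -> g t = 0].

Lemma cont_comp (f g : R -> R) : continuous f -> continuous g -> continuous (fun t => g (f t)).
Proof. by move=> cf cg t; exact: (continuous_comp (cf t) (cg (f t))). Qed.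

Lemma cont_shift (T : R) : continuous (fun t : R => t + T).
Proof. by move=> t; apply: cvgD; [exact: cvg_id | exact: cvg_cst]. Qed.

Lemma cont_scale (w : R) : continuous (fun t : R => w * t).
Proof. by move=> t; apply: cvgM; [exact: cvg_cst | exact: cvg_id]. Qed.

Lemma cont_add (f g : R -> R) : continuous f -> continuous g -> continuous (fun t => f t + g t).
Proof. by move=> cf cg t; apply: cvgD; [exact: cf | exact: cg]. Qed.
Lemma cont_sub (f g : R -> R) : continuous f -> continuous g -> continuous (fun t => f t - g t).
Proof. by move=> cf cg t; apply: cvgB; [exact: cf | exact: cg]. Qed.
Lemma cont_mul (f g : R -> R) : continuous f -> continuous g -> continuous (fun t => f t * g t).
Proof. by move=> cf cg t; apply: cvgM; [exact: cf | exact: cg]. Qed.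

Local Open Scope complex_scope.
Lemma csupp_shift g (T : R) : csupp g -> csupp (fun t => g (t + T)).
Proof.
move=> [cr ci [M hM]]; split.
- exact: (cont_comp _ _ (cont_shift T) cr).
- exact: (cont_comp _ _ (cont_shift T) ci).
- exists (M + `|T|) => t Ht; apply: hM.
  have := ler_normD (t + T) (- T); rewrite addrK normrN => H; lra.
Qed.

Lemma test (psi : R -> R[i]) (w : R) : test_fun psi -> csupp (fun t => psi t * cexp (- 'i * (w * t)%:C)).
Proof.
move=> [sr [si [M hM]]].
have cr : continuous (fun t => complex.Re (psi t)).
  move=> t; apply/differentiable_continuous/derivable1_diffP; exact: (sr 0%N t).
have ci : continuous (fun t => complex.Im (psi t)).
  move=> t; apply/differentiable_continuous/derivable1_diffP; exact: (si 0%N t).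
have cc : continuous (fun t : R => cos (w * t)).
  exact: (cont_comp _ _ (cont_scale w) (@continuous_cos R)).
have cs : continuous (fun t : R => sin (w * t)).
  exact: (cont_comp _ _ (cont_scale w) (@continuous_sin R)).
split.
- have -> : (fun t => complex.Re (psi t * cexp (- 'i * (w * t)%:C))) =
    (fun t => complex.Re (psi t) * cos (w * t) + complex.Im (psi t) * sin (w * t)).
    by apply/funext => t; rewrite cexp_mi; case: (psi t) => a b /=; ring.
  exact: cont_add (cont_mul _ _ cr cc) (cont_mul _ _ ci cs).
- have -> : (fun t => complex.Im (psi t * cexp (- 'i * (w * t)%:C))) =
    (fun t => complex.Im (psi t) * cos (w * t) - complex.Re (psi t) * sin (w * t)).
    by apply/funext => t; rewrite cexp_mi; case: (psi t) => a b /=; ring.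
  exact: cont_sub (cont_mul _ _ ci cc) (cont_mul _ _ cr cs).
- exists M => t Ht; by rewrite hM // mul0r.
Qed.
Lemma int_part (g : R -> R[i]) (p : R[i] -> R) :
  csupp g -> (p = @complex.Re R \/ p = @complex.Im R) ->
  (@lebesgue_measure R).-integrable setT (EFin \o (fun t => p (g t))).
Proof.
move=> [cr ci [M hM]] [->|->].
  apply: (int_cs _ M cr) => t Ht; by rewrite hM.
apply: (int_cs _ M ci) => t Ht; by rewrite hM.
Qed.

Lemma cint_mulr (g : R -> R[i]) (K : R[i]) : csupp g -> cint (fun t => g t * K) = cint g * K.
Proof.
move=> cg; case: K => k1 k2; rewrite /cint.
have iR := int_part _ _ cg (or_introl erefl).
have iI := int_part _ _ cg (or_intror erefl).
have -> : (fun t => complex.Re (g t * Complex k1 k2)) =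
    (fun t => complex.Re (g t) * k1 - complex.Im (g t) * k2).
  by apply/funext => t; case: (g t) => a b.
have -> : (fun t => complex.Im (g t * Complex k1 k2)) =
    (fun t => complex.Re (g t) * k2 + complex.Im (g t) * k1).
  by apply/funext => t; case: (g t) => a b.
have ccst (k : R) : continuous (fun _ : R => k) by move=> t; exact: cvg_cst.
case: (cg) => cr ci [M hM].
have iRk (k : R) : (@lebesgue_measure R).-integrable setT (EFin \o (fun t => complex.Re (g t) * k)).
  apply: (int_cs _ M (cont_mul _ _ cr (ccst k))) => t Ht; by rewrite hM //= mul0r.
have iIk (k : R) : (@lebesgue_measure R).-integrable setT (EFin \o (fun t => complex.Im (g t) * k)).
  apply: (int_cs _ M (cont_mul _ _ ci (ccst k))) => t Ht; by rewrite hM //= mul0r.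
rewrite RintegralB // RintegralD // !RintegralZr //.
all: try (apply/eqP; rewrite eq_complex /=; apply/andP; split; apply/eqP; ring).
Qed.

Lemma cint_shift (g : R -> R[i]) (T : R) : csupp g -> cint (fun t => g (t + T)) = cint g.
Proof.
case=> cr ci _; rewrite /cint.
by rewrite (Rint_shift T _ cr) (Rint_shift T _ ci).
Qed.

Lemma invFT_shift (psi : R -> R[i]) (T w : R) : test_fun psi ->
  invFT (fun t => psi (t + T)) w = cexp ('i * (w * T)%:C) * invFT psi w.
Proof.
move=> tp; rewrite /invFT.
have cg := test psi w tp.
have -> : (fun t => psi (t + T) * cexp (- 'i * (w * t)%:C)) =
  (fun t => (fun s => psi s * cexp (- 'i * (w * s)%:C)) (t + T) * cexp ('i * (w * T)%:C)).
  by apply/funext => t /=; rewrite (shift_exp w t T) mulrA.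
rewrite cint_mulr; last exact: (csupp_shift _ T cg).
rewrite (cint_shift (fun s => psi s * cexp (- 'i * (w * s)%:C))) //.
ring.
Qed.

End SA.

Theorem lemma2p2 (R : realType) (c0 tau1 alpha2 : R) :
  0 < c0 -> 0 < tau1 -> 0 <= alpha2 ->
  forall x : 'rV[R]_3, x != 0 ->
  forall psi : R -> R[i], test_fun psi ->
    translate (T1 c0 alpha2 x) (green (alpha_tv c0 tau1) c0 x) psi
    = green (alpha_ksb c0 tau1 alpha2) c0 x psi.
Proof.
move=> _ _ _ x _ psi tp; rewrite /translate /green.
congr cint; apply/funext => w.
by rewrite invFT_shift // mulrA ghat_id.
Qed.
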